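(* In the $\ell^1$ linear social choice setting, random dictatorship $f_{\mathrm{RD}}$ satisfies $\mathrm{D}(f_{\mathrm{RD}})=\Omega(d)$ and $\mathrm{D}(f_{\mathrm{RD}})=O(d^3)$.
   Context: Setting ($\ell^1$ linear social choice). Fix a dimension $d\ge 1$ and let $\Delta_d=\{x\in\mathbb{R}^d_{\ge 0}:\sum_i x^i=1\}$. An instance consists of a finite set $V$ of $n$ voters and a finite set $C$ of $m$ candidates, each a vector in $\Delta_d$, with every voter vector in $\mathrm{Cone}(C)$ (nonnegative linear combinations of candidate vectors). Utility: $u_v(c)=v^\top c$. Each voter reports a ranking of $C$ consistent with its utilities (ties broken arbitrarily). $\mathrm{UW}(c)=\sum_{v\in V}u_v(c)$. A randomized voting rule outputs a distribution over $C$ from the profile only. Distortion on an instance: $\max_c\mathrm{UW}(c)/\mathbb{E}_{c\sim f}[\mathrm{UW}(c)]$; $\mathrm{D}(f)$ is the supremum over all instances, as a function of $d$. Random dictatorship $f_{\mathrm{RD}}$: pick a voter uniformly at random and output that voter's top-ranked candidate. *)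

(* Defs.v *)
From HB Require Import structures.
From mathcomp Require Import all_boot all_order all_algebra.
From mathcomp Require Import reals.
Set Implicit Arguments. Unset Strict Implicit. Unset Printing Implicit Defensive.
Import Order.TTheory GRing.Theory Num.Theory.
Local Open Scope ring_scope.

Section L1SocialChoice.
Variable R : realType.

Definition dotp (d : nat) (x y : 'I_d -> R) : R := \sum_(i < d) x i * y i.

Definition in_simplex (d : nat) (x : 'I_d -> R) : Prop :=
  (forall i, 0 <= x i) /\ \sum_(i < d) x i = 1.

Definition in_cone (d m : nat) (cand : 'I_m -> 'I_d -> R) (x : 'I_d -> R) : Prop :=
  exists lam : 'I_m -> R, (forall j, 0 <= lam j) /\
    (forall i, x i = \sum_(j < m) lam j * cand j i).

Definition UW (d n m : nat) (vot : 'I_n -> 'I_d -> R) (cand : 'I_m -> 'I_d -> R)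
  (j : 'I_m) : R := \sum_(k < n) dotp (vot k) (cand j).

(* A valid instance: n >= 1 voters, candidates and voters in the simplex,
   voters in Cone(C), and top k is the top-ranked candidate of voter k
   in a ranking consistent with utilities (ties broken arbitrarily, i.e.
   any utility maximizer). *)
Definition valid_instance (d n m : nat) (vot : 'I_n -> 'I_d -> R)
  (cand : 'I_m -> 'I_d -> R) (top : 'I_n -> 'I_m) : Prop :=
  [/\ (0 < n)%N,
      (forall k, in_simplex (vot k)),
      (forall j, in_simplex (cand j)),
      (forall k, in_cone cand (vot k)) &
      (forall k j, dotp (vot k) (cand j) <= dotp (vot k) (cand (top k)))].

Definition RD_welfare (d n m : nat) (vot : 'I_n -> 'I_d -> R)
  (cand : 'I_m -> 'I_d -> R) (top : 'I_n -> 'I_m) : R :=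
  (\sum_(k < n) UW vot cand (top k)) / n%:R.

Definition RD_distortion (d n m : nat) (vot : 'I_n -> 'I_d -> R)
  (cand : 'I_m -> 'I_d -> R) (top : 'I_n -> 'I_m) : R :=
  (\big[Num.max/0]_(j < m) UW vot cand j) / RD_welfare vot cand top.

End L1SocialChoice.

(* Main.v *)
Require Import Defs.
From HB Require Import structures.
From mathcomp Require Import all_boot all_order all_algebra.
From mathcomp Require Import reals.
From mathcomp Require Import ring lra.
Import Order.TTheory GRing.Theory Num.Theory.
Set Implicit Arguments. Unset Strict Implicit. Unset Printing Implicit Defensive.
Local Open Scope ring_scope.

Section Proofs.
Variable R : realType.

Lemma simplex_le1 d (v : 'I_d -> R) i : in_simplex v -> v i <= 1.
Proof.
case=> v0 vs; rewrite -vs (bigD1 i) //= lerDl; exact: sumr_ge0.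
Qed.

Lemma dotp_ge0 d (v c : 'I_d -> R) : in_simplex v -> in_simplex c -> 0 <= dotp v c.
Proof. case=> v0 _ [c0 _]; apply: sumr_ge0 => i _; exact: mulr_ge0. Qed.

Lemma dotp_le1 d (v c : 'I_d -> R) : in_simplex v -> in_simplex c -> dotp v c <= 1.
Proof.
move=> hv hc; have [v0 vs] := hv; rewrite -vs /dotp; apply: ler_sum => i _.
by rewrite -{2}(mulr1 (v i)); apply: ler_wpM2l => //; apply: simplex_le1.
Qed.

Lemma sumsq_ge d (v : 'I_d -> R) :
  \sum_(i < d) v i = 1 -> 1 <= d%:R * \sum_(i < d) v i * v i.
Proof.
move=> vs.
have dpos : (0 < d)%N.
  by move: v vs; case: d => [v|//]; rewrite big_ord0 => /eqP; rewrite eq_sym oner_eq0.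
have H : 0 <= \sum_(i < d) (d%:R * v i - 1) ^+ 2 by apply: sumr_ge0 => i _; exact: sqr_ge0.
have E : \sum_(i < d) (d%:R * v i - 1) ^+ 2 =
   d%:R * d%:R * (\sum_(i < d) v i * v i) - 2 * d%:R * (\sum_(i < d) v i) + d%:R.
  rewrite (eq_bigr (fun i => d%:R * d%:R * (v i * v i) - 2 * d%:R * v i + 1)); last first.
    by move=> i _; ring.
  rewrite big_split /= sumrB -!mulr_sumr sumr_const card_ord.
  by rewrite -[1 *+ d]/(d%:R).
rewrite E vs in H.
set D := d%:R in H *; set Q := \sum_(i < d) v i * v i in H *.
have D0 : 1 <= D by rewrite /D ler1n.
nra.
Qed.

Lemma top_ge d m (cand : 'I_m -> 'I_d -> R) (v : 'I_d -> R) (t : 'I_m) :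
  in_simplex v -> (forall j, in_simplex (cand j)) -> in_cone cand v ->
  (forall j, dotp v (cand j) <= dotp v (cand t)) ->
  1 <= d%:R * dotp v (cand t).
Proof.
move=> [v0 vs] cs [lam [lam0 hv]] ht.
have sl : \sum_(j < m) lam j = 1.
  rewrite -vs (eq_bigr _ (fun i _ => hv i)) exchange_big /=.
  apply: eq_bigr => j _; rewrite -mulr_sumr; have [_ ->] := cs j; by rewrite mulr1.
have Q : \sum_(i < d) v i * v i <= dotp v (cand t).
  rewrite (eq_bigr (fun i => v i * \sum_(j < m) lam j * cand j i)); last by move=> i _; rewrite -hv.
  rewrite (eq_bigr (fun i => \sum_(j < m) lam j * (v i * cand j i))); last first.
    by move=> i _; rewrite mulr_sumr; apply: eq_bigr => j _; ring.
  rewrite exchange_big /=.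
  rewrite -[X in _ <= X]mul1r -sl mulr_suml.
  apply: ler_sum => j _; rewrite -mulr_sumr; apply: ler_wpM2l => //; exact: ht.
exact: (Order.POrderTheory.le_trans (sumsq_ge vs) (ler_wpM2l (ler0n _ d) Q)).
Qed.


Lemma voter_bound d (c v s : 'I_d -> R) (sig : R) :
  in_simplex v -> in_simplex c -> (forall i, 0 <= s i) -> 0 <= sig ->
  1 <= d%:R * dotp v c ->
  sig * (1 - 2 * d%:R * \sum_(i < d) (if s i < sig then v i else 0))
    <= 2 * d%:R * dotp s c.
Proof.
move=> hv hc s0 sig0 hvc.
have [v0 vs] := hv; have [c0 cs] := hc.
set D := d%:R in hvc *.
have D0 : 0 <= D by rewrite /D ler0n.
have st0 : 0 <= dotp s c by apply: sumr_ge0 => i _; exact: mulr_ge0.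
set B := \sum_(i < d) _.
have B0 : 0 <= B by apply: sumr_ge0 => i _; case: ifP.
case: (boolP [exists i, (s i < sig) && (1 <= 2 * D * v i)]).
  move/existsP => [i /andP [si vi]].
  have viB : v i <= B.
    rewrite /B (bigD1 i) //= si lerDl; apply: sumr_ge0 => k _; by case: ifP.
  have X : 1 <= 2 * D * B.
    apply: le_trans vi _; apply: ler_wpM2l => //; exact: mulr_ge0.
  nra.
rewrite negb_exists => /forallP H.
set A := \sum_(i < d) (if 1 <= 2 * D * v i then c i else 0).
have h1 : sig * A <= dotp s c.
  rewrite /A mulr_sumr; apply: ler_sum => i _; case: ifP => hvi.
    have : sig <= s i by rewrite leNgt; move: (H i); rewrite hvi andbT.
    by move=> h; apply: ler_wpM2r.
  by rewrite mulr0; apply: mulr_ge0.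
have h2 : 2 * D * dotp v c <= 2 * D * A + 1.
  rewrite -cs /dotp /A mulr_sumr mulr_sumr -big_split /=.
  apply: ler_sum => i _; case: ifP => hvi.
    have := simplex_le1 i hv; have := c0 i; have := mulr_ge0 D0 (c0 i); nra.
  have := c0 i; have := v0 i; move: hvi => /negbT; rewrite -ltNge => hvi; nra.
have h3 : 0 <= sig * (D * B) by apply: mulr_ge0 => //; exact: mulr_ge0.
have h4 : 0 <= D * (dotp s c - sig * A) by apply: mulr_ge0 => //; rewrite subr_ge0.
nra.
Qed.


Lemma upper d n m (vot : 'I_n -> 'I_d -> R) (cand : 'I_m -> 'I_d -> R)
  (top : 'I_n -> 'I_m) :
  (0 < d)%N -> valid_instance vot cand top ->
  RD_distortion vot cand top <= 16 * d%:R ^+ 3.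
Proof.
move=> dpos [n0 vs cs vc vt].
have D1 : 1 <= d%:R :> R by rewrite ler1n.
have N1 : 1 <= n%:R :> R by rewrite ler1n.
set D := d%:R in D1 *; set N := n%:R in N1 *.
pose s i := \sum_(k < n) vot k i.
have s0 : forall i, 0 <= s i.
  by move=> i; apply: sumr_ge0 => k _; have [h _] := vs k; exact: h.
have UWs : forall j, UW vot cand j = dotp s (cand j).
  move=> j; rewrite /UW /dotp exchange_big /=; apply: eq_bigr => i _.
  by rewrite mulr_suml.
have Maxn : \big[Num.max/0]_(j < m) UW vot cand j <= N.
  apply: bigmax_le; first exact: (le_trans ler01 N1).
  move=> j _; rewrite /UW.
  apply: le_trans (ler_sum _ (fun k _ => dotp_le1 (vs k) (cs j))) _.
  by rewrite sumr_const card_ord.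
pose sig := N / (4 * D ^+ 2).
have D0 : D != 0 by rewrite gt_eqF // (lt_le_trans ltr01 D1).
have hsig : 4 * D ^+ 2 * sig = N by rewrite /sig; field; rewrite D0.
have sig0 : 0 <= sig.
  apply: divr_ge0; first exact: (le_trans ler01 N1).
  by rewrite mulr_ge0 // sqr_ge0.
pose X := \sum_(k < n) dotp s (cand (top k)).
pose B k := \sum_(i < d) (if s i < sig then vot k i else 0).
have per : forall k, sig * (1 - 2 * D * B k) <= 2 * D * dotp s (cand (top k)).
  move=> k; exact: voter_bound (vs k) (cs (top k)) s0 sig0 (top_ge (vs k) cs (vc k) (vt k)).
have sumB : \sum_(k < n) B k <= D * sig.
  rewrite /B exchange_big /=.
  have -> : D * sig = \sum_(i < d) sig by rewrite sumr_const card_ord /D mulr_natl.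
  apply: ler_sum => i _.
  have -> : \sum_(k < n) (if s i < sig then vot k i else 0) = if s i < sig then s i else 0.
    by case: ifP => _ //; rewrite big1.
  by case: ifP => h //; apply: ltW.
have HX : sig * (N - 2 * D * (D * sig)) <= 2 * D * X.
  have e : \sum_(k < n) sig * (1 - 2 * D * B k) = sig * (N - 2 * D * \sum_(k < n) B k).
    by rewrite -mulr_sumr sumrB sumr_const card_ord -mulr_sumr.
  have H1 : \sum_(k < n) sig * (1 - 2 * D * B k) <= 2 * D * X.
    by rewrite /X mulr_sumr; apply: ler_sum => k _; exact: per.
  rewrite e in H1; apply: le_trans H1.
  apply: ler_wpM2l => //; rewrite lerD2l lerN2; apply: ler_wpM2l => //.
  by apply: mulr_ge0 => //; apply: (le_trans ler01).
have key : N * N <= 16 * D ^+ 3 * X.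
  have E : 8 * D ^+ 2 * (sig * (N - 2 * D * (D * sig))) = N * N.
    by rewrite -hsig; ring.
  rewrite -E.
  have -> : 16 * D ^+ 3 * X = 8 * D ^+ 2 * (2 * D * X) by ring.
  apply: ler_wpM2l => //; by rewrite mulr_ge0 // sqr_ge0.
have Xpos : 0 < X.
  have : 0 < N * N by rewrite mulr_gt0 // (lt_le_trans ltr01 N1).
  move=> h; have h2 := lt_le_trans h key.
  have D3 : 0 < 16 * D ^+ 3 by rewrite mulr_gt0 // exprn_gt0 // (lt_le_trans ltr01 D1).
  by rewrite -(pmulr_rgt0 _ D3).
have Npos : 0 < N by rewrite (lt_le_trans ltr01 N1).
rewrite /RD_distortion.
have -> : RD_welfare vot cand top = X / N.
  by rewrite /RD_welfare /X; congr (_ / _); apply: eq_bigr => k _; exact: UWs.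
rewrite ler_pdivrMr ?divr_gt0 //.
apply: le_trans Maxn _.
rewrite mulrA ler_pdivlMr //.
Qed.


Lemma sum_delta d (f : 'I_d -> R) (j : 'I_d) : \sum_(i < d) f i * (i == j)%:R = f j.
Proof.
rewrite (bigD1 j) //= eqxx mulr1 big1 ?addr0 // => i /negbTE ->; by rewrite mulr0.
Qed.

Lemma sd d (k : 'I_d) : \sum_(i < d) ((i == k)%:R : R) = 1.
Proof.
rewrite (eq_bigr (fun i => (fun _ => (1:R)) i * (i == k)%:R)) ?sum_delta // => i _.
by rewrite mul1r.
Qed.

Lemma natb_bounds (b : bool) : 0 <= (b%:R : R) /\ (b%:R : R) <= 1.
Proof. by case: b; rewrite ?ler01 ?lexx. Qed.

Lemma lower d : (0 < d)%N -> exists n m (vot : 'I_n -> 'I_d -> R)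
  (cand : 'I_m -> 'I_d -> R) (top : 'I_n -> 'I_m),
  valid_instance vot cand top /\ 1/2 * d%:R <= RD_distortion vot cand top.
Proof.
case: d => [//|d'] _.
pose vot := fun (k i : 'I_d'.+1) => (((i == k)%:R + (i == ord0)%:R) / 2 : R).
pose cand := fun (j i : 'I_d'.+1) => ((i == j)%:R : R).
have dp : forall v j, dotp v (cand j) = v j by move=> v j; exact: sum_delta.
have sv : forall k, \sum_i vot k i = 1.
  move=> k; rewrite /vot -mulr_suml big_split /= sd.
  rewrite (eq_bigr (fun i => ((i == ord0)%:R : R))) // sd; lra.
have vot0 : forall k i, 0 <= vot k i.
  move=> k i; rewrite /vot; have [h1 _] := natb_bounds (i == k);
  have [h2 _] := natb_bounds (i == ord0); lra.
have V1 : forall k, in_simplex (vot k).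
  by move=> k; split; [exact: (vot0 k) | exact: (sv k)].
have V2 : forall j, in_simplex (cand j).
  move=> j; split; first by move=> i; have [h _] := natb_bounds (i == j).
  exact: sd.
have V3 : forall k, in_cone cand (vot k).
  move=> k; exists (vot k); split; first exact: (vot0 k).
  move=> i; rewrite /cand -(sum_delta (vot k) i); apply: eq_bigr => j _.
  by rewrite eq_sym.
have V4 : forall k j, dotp (vot k) (cand j) <= dotp (vot k) (cand (id k)).
  move=> k j; rewrite !dp /vot eqxx.
  case: (eqVneq j k) => [->|ne]; first exact: lexx.
  have [h1 h2] := natb_bounds (j == ord0); have [h3 h4] := natb_bounds (k == ord0).
  have : ((false%:R) : R) = 0 by [].
  have : ((true%:R) : R) = 1 by [].
  lra.
exists d'.+1, d'.+1, vot, cand, id; split; first by split.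
have RD1 : RD_welfare vot cand id = 1.
  rewrite /RD_welfare /UW.
  rewrite (eq_bigr (fun k => \sum_(k0 < d'.+1) vot k0 k)); last first.
    by move=> k _; apply: eq_bigr => k0 _; exact: dp.
  rewrite exchange_big /= (eq_bigr (fun _ => 1)); last by move=> k _; exact: sv.
  rewrite sumr_const card_ord divff // pnatr_eq0.
  by [].
rewrite /RD_distortion RD1 divr1.
apply: le_trans (le_bigmax _ _ ord0).
rewrite /UW (eq_bigr (fun k => vot k ord0)); last by move=> k _; exact: dp.
rewrite /vot -mulr_suml big_split /= sumr_const card_ord.
rewrite (eq_bigr (fun i => ((i == ord0)%:R : R))); last by move=> i _; rewrite eq_sym.
rewrite sd.
have : 0 <= (d'.+1)%:R :> R by exact: ler0n.
have -> : (1 *+ d'.+1 : R) = (d'.+1)%:R by [].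
lra.
Qed.

End Proofs.

Theorem theorem7 (R : realType) :
  exists (c C : R) (N : nat), 0 < c /\ 0 < C /\
    forall d : nat, (N <= d)%N ->
      (exists (n m : nat) (vot : 'I_n -> 'I_d -> R) (cand : 'I_m -> 'I_d -> R)
              (top : 'I_n -> 'I_m),
          valid_instance vot cand top /\ c * d%:R <= RD_distortion vot cand top) /\
      (forall (n m : nat) (vot : 'I_n -> 'I_d -> R) (cand : 'I_m -> 'I_d -> R)
              (top : 'I_n -> 'I_m),
          valid_instance vot cand top -> RD_distortion vot cand top <= C * d%:R ^+ 3).
Proof.
exists (1/2), 16, 1%N; split; first lra.
split; first lra.
move=> d hd; split; first exact: lower.
move=> n m vot cand top; exact: upper.
Qed.
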